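(* Let $m\geq 3$ be an integer and let $P$ be the uniform distribution (normalized one-dimensional length measure) on the boundary of a regular $m$-sided polygon $A_1A_2\cdots A_m$ inscribed in the unit circle $x_1^2+x_2^2=1$ in $\mathbb{R}^2$. Let $\beta=\{A_1,\dots,A_m\}$ be the set of vertices of the polygon, and for $n\geq m$ let $V_n$ denote the $n$th conditional quantization error of $P$ with respect to $\beta$, and $V_\infty=\lim_{n\to\infty}V_n$. Then the conditional quantization coefficient of $P$ exists as a finite positive number and \[\lim_{n\to\infty} n^2\,(V_n-V_\infty)=\frac13\, m^2\sin^2\frac{\pi}{m}.\]
   Context: Conditional quantization: for a Borel probability measure $P$ on $\mathbb{R}^2$ (Euclidean norm $\|\cdot\|$) and a finite set $\beta\subset\mathbb{R}^2$ with $\mathrm{card}(\beta)=\ell$, for $n\geq \ell$ the $n$th conditional quantization error with respect to $\beta$ is $V_n=\inf\{\int \min_{a\in\alpha\cup\beta}\|x-a\|^2\,dP(x):\alpha\subset\mathbb{R}^2,\ \mathrm{card}(\alpha)\leq n-\ell\}$. The vertices may be taken as $A_j=(\cos\theta_j,\sin\theta_j)$ with $\theta_j=\frac{3\pi}{2}-\frac{\pi}{m}+(j-1)\frac{2\pi}{m}$, $1\le j\le m$. *)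

(* Defs.v *)
From Stdlib Require Import Reals Lra List.
From Coquelicot Require Import Coquelicot.
Import ListNotations.
Open Scope R_scope.

Definition dist2 (x a : R * R) : R :=
  (fst x - fst a) ^ 2 + (snd x - snd a) ^ 2.

(* Vertex A_{j+1} (j = 0..m-1) of the regular m-gon inscribed in the unit circle:
   angle 3pi/2 - pi/m + j * 2pi/m. *)
Definition vertex (m j : nat) : R * R :=
  let th := 3 * PI / 2 - PI / INR m + INR j * (2 * PI / INR m) in
  (cos th, sin th).

Definition beta (m : nat) : list (R * R) := map (vertex m) (seq 0 m).

Definition min_dist2 (x a0 : R * R) (l : list (R * R)) : R :=
  fold_right (fun a acc => Rmin (dist2 x a) acc) (dist2 x a0) l.

Definition side_pt (m j : nat) (t : R) : R * R :=
  let A := vertex m j in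
  let B := vertex m (S j mod m) in
  (fst A + t * (fst B - fst A), snd A + t * (snd B - snd A)).

(* Integral of f with respect to P, the normalized length measure on the boundary
   of the polygon: all m sides have equal length, so P is the average over the
   sides of the uniform (arc-length) distribution on each side. *)
Definition P_integral (m : nat) (f : R * R -> R) : R :=
  / INR m * fold_right Rplus 0
    (map (fun j => RInt (fun t => f (side_pt m j t)) 0 1) (seq 0 m)).

Definition cond_distortion (m : nat) (alpha : list (R * R)) : R :=
  P_integral m (fun x => min_dist2 x (vertex m 0) (alpha ++ beta m)).

(* n-th conditional quantization error w.r.t. beta: infimum over alpha with
   card(alpha) <= n - m (lists of length <= n - m represent such finite sets). *)
Definition V (m n : nat) : R :=
  real (Glb_Rbar (fun v => exists alpha : list (R * R),
          (length alpha <= n - m)%nat /\ v = cond_distortion m alpha)).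

(* Main.v *)
Require Import Defs.
From Stdlib Require Import Reals Lra Lia Psatz List Arith.
From Coquelicot Require Import Coquelicot.
Import ListNotations.
Open Scope R_scope.

Lemma cont_Rmin (f g : R -> R) x : continuous f x -> continuous g x ->
  continuous (fun y => Rmin (f y) (g y)) x.
Proof.
  intros Hf Hg.
  apply continuous_ext with (f := fun y => (f y + (g y + - Rabs (f y + - g y))) * / 2).
  { intros y. unfold Rmin. destruct Rle_dec.
    - rewrite Rabs_left1; lra.
    - rewrite Rabs_right; lra. }
  apply (continuous_mult (fun y => f y + (g y + - Rabs (f y + - g y))) (fun _ => / 2)).
  2: apply continuous_const.
  apply (continuous_plus f). exact Hf.
  apply (continuous_plus g). exact Hg.
  apply (continuous_opp (fun y => Rabs (f y + - g y))).
  apply continuous_Rabs_comp.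
  apply (continuous_plus f). exact Hf.
  apply (continuous_opp g). exact Hg.
Qed.

Lemma cont_md m j a0 l t : continuous (fun t => min_dist2 (side_pt m j t) a0 l) t.
Proof.
  induction l as [|a l IH]; simpl.
  - apply (@ex_derive_continuous R_AbsRing R_NormedModule). unfold dist2, side_pt; simpl. auto_derive. auto.
  - apply cont_Rmin; auto.
    apply (@ex_derive_continuous R_AbsRing R_NormedModule). unfold dist2, side_pt; simpl. auto_derive. auto.
Qed.

Lemma ex_cont (f : R -> R) a b : (forall t, continuous f t) -> ex_RInt f a b.
Proof. intros H. apply (@ex_RInt_continuous R_CompleteNormedModule). intros; apply H. Qed.

Lemma cont_sq D a t : continuous (fun t => D*(t-a)^2) t.
Proof. apply (@ex_derive_continuous R_AbsRing R_NormedModule). auto_derive. auto. Qed.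

Lemma RInt_sq D a x y : RInt (fun t => D*(t-a)^2) x y = D*(y-a)^3/3 - D*(x-a)^3/3.
Proof.
  apply is_RInt_unique.
  assert (H := is_RInt_derive (fun t => D*(t-a)^3/3) (fun t => D*(t-a)^2) x y).
  simpl in H. unfold minus, plus, opp in H; simpl in H.
  replace (D * (y - a) ^ 3 / 3 - D * (x - a) ^ 3 / 3) with
    (D * (y - a) ^ 3 / 3 + - (D * (x - a) ^ 3 / 3)) by ring.
  apply H.
  - intros t _. auto_derive. auto. field.
  - intros t _. apply cont_sq.
Qed.

Lemma chasles (f : R -> R) a b c : (forall t, continuous f t) ->
  RInt f a c = RInt f a b + RInt f b c.
Proof.
  intros H. rewrite <- (RInt_Chasles f a b c); try apply ex_cont; auto.
Qed.

Lemma piece_upper f D a b : (forall t, continuous f t) -> a <= b ->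
  (forall t, a <= t <= b -> f t <= D*(t-a)^2 /\ f t <= D*(t-b)^2) ->
  RInt f a b <= D*(b-a)^3/12.
Proof.
  intros Hc Hab H.
  rewrite (chasles f a ((a+b)/2) b Hc).
  assert (H1 : RInt f a ((a+b)/2) <= RInt (fun t => D*(t-a)^2) a ((a+b)/2)).
  { apply RInt_le; try apply ex_cont; auto. lra. apply cont_sq.
    intros t Ht. apply H; lra. }
  assert (H2 : RInt f ((a+b)/2) b <= RInt (fun t => D*(t-b)^2) ((a+b)/2) b).
  { apply RInt_le; try apply ex_cont; auto. lra. apply cont_sq.
    intros t Ht. apply H; lra. }
  rewrite RInt_sq in H1. rewrite RInt_sq in H2.
  replace (D * (b - a) ^ 3 / 12) with
   ((D * ((a + b) / 2 - a) ^ 3 / 3 - D * (a - a) ^ 3 / 3) +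
    (D * (b - b) ^ 3 / 3 - D * ((a + b) / 2 - b) ^ 3 / 3)) by field.
  lra.
Qed.

Lemma piece_lower f D a b e : (forall t, continuous f t) -> 0 <= e -> 2*e <= b - a ->
  (forall t, a <= t <= a + e -> D*(t-a)^2 <= f t) ->
  (forall t, b - e <= t <= b -> D*(t-b)^2 <= f t) ->
  (forall t, a <= t <= b -> 0 <= f t) ->
  2*D*e^3/3 <= RInt f a b.
Proof.
  intros Hc He Hab H1 H2 H0.
  rewrite (chasles f a (a+e) b Hc). rewrite (chasles f (a+e) (b-e) b Hc).
  assert (I1 : RInt (fun t => D*(t-a)^2) a (a+e) <= RInt f a (a+e)).
  { apply RInt_le; try apply ex_cont; auto. lra. apply cont_sq.
    intros t Ht. apply H1; lra. }
  assert (I2 : RInt (fun t => D*(t-b)^2) (b-e) b <= RInt f (b-e) b).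
  { apply RInt_le; try apply ex_cont; auto. lra. apply cont_sq.
    intros t Ht. apply H2; lra. }
  assert (I3 : 0 <= RInt f (a+e) (b-e)).
  { apply RInt_ge_0; try apply ex_cont; auto. lra. intros t Ht; apply H0; lra. }
  rewrite RInt_sq in I1. rewrite RInt_sq in I2.
  replace (2 * D * e ^ 3 / 3) with
   ((D * (a + e - a) ^ 3 / 3 - D * (a - a) ^ 3 / 3) +
    (D * (b - b) ^ 3 / 3 - D * (b - e - b) ^ 3 / 3)) by field.
  lra.
Qed.

Lemma cube_tangent d N L : 0 <= d -> 0 < N -> 0 <= L ->
  3*L^2*d - 2*L^3*N <= d^3/N^2.
Proof.
  intros Hd HN HL.
  assert (E : d^3/N^2 - (3*L^2*d - 2*L^3*N) = (d - L*N)^2*(d+2*L*N)/N^2) by (field; lra).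
  assert (0 <= (d - L*N)^2*(d+2*L*N)/N^2).
  { apply Rmult_le_pos. apply Rmult_le_pos. apply pow2_ge_0. nra.
    apply Rlt_le, Rinv_0_lt_compat. nra. }
  lra.
Qed.

Lemma cube_super d1 d2 N1 N2 : 0 <= d1 -> 0 <= d2 -> 0 < N1 -> 0 < N2 ->
  (d1+d2)^3/(N1+N2)^2 <= d1^3/N1^2 + d2^3/N2^2.
Proof.
  intros.
  set (L := (d1+d2)/(N1+N2)).
  assert (0 <= L) by (unfold L; apply Rmult_le_pos; [lra| apply Rlt_le, Rinv_0_lt_compat; lra]).
  pose proof (cube_tangent d1 N1 L). pose proof (cube_tangent d2 N2 L).
  assert (E : (d1+d2)^3/(N1+N2)^2 = 3*L^2*d1 - 2*L^3*N1 + (3*L^2*d2 - 2*L^3*N2))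
    by (unfold L; field; lra).
  rewrite E. assert (3 * L ^ 2 * d1 - 2 * L ^ 3 * N1 <= d1 ^ 3 / N1 ^ 2) by auto.
  assert (3 * L ^ 2 * d2 - 2 * L ^ 3 * N2 <= d2 ^ 3 / N2 ^ 2) by auto. lra.
Qed.

Lemma min_super C X X1 X2 : 0 <= C -> 0 <= X1 -> 0 <= X2 -> X <= X1 + X2 ->
  Rmin C X <= Rmin C X1 + Rmin C X2.
Proof.
  intros. unfold Rmin. destruct (Rle_dec C X), (Rle_dec C X1), (Rle_dec C X2); lra.
Qed.

Section Core.
Variables (D e0 : R).
Hypothesis (HD : 0 < D) (He0 : 0 < e0).

Definition Fb (d : R) (k : nat) := Rmin (2*D*e0^3/3) (D*d^3/(12*(INR k+1)^2)).

Definition hyp (f : R -> R) (a b : R) (S : list R) :=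
  forall t, a <= t <= b -> D*e0^2 <= f t \/ D*(t-a)^2 <= f t \/ D*(t-b)^2 <= f t \/
     exists s, In s S /\ D*(t-s)^2 <= f t.

Lemma core_base (f : R -> R) a b : (forall t, continuous f t) -> a <= b ->
  (forall t, a <= t <= b -> 0 <= f t) -> hyp f a b [] -> Fb (b-a) 0 <= RInt f a b.
Proof.
  intros Hc Hab H0 H.
  set (e := Rmin ((b-a)/2) e0).
  assert (He : 0 <= e) by (unfold e, Rmin; destruct Rle_dec; lra).
  assert (Hea : e <= (b-a)/2) by apply Rmin_l.
  assert (Hee : e <= e0) by apply Rmin_r.
  assert (L := piece_lower f D a b e Hc He ltac:(lra)).
  assert (2*D*e^3/3 <= RInt f a b).
  { apply L; auto.
    - intros t Ht. destruct (H t ltac:(lra)) as [h|[h|[h|[s [hs _]]]]]; try (simpl in hs; contradiction).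
      + assert ((t-a)^2 <= e0^2) by (apply pow_incr; lra). nra.
      + auto.
      + assert ((t-a)^2 <= (t-b)^2) by nra. nra.
    - intros t Ht. destruct (H t ltac:(lra)) as [h|[h|[h|[s [hs _]]]]]; try (simpl in hs; contradiction).
      + assert ((t-b)^2 <= e0^2) by nra. nra.
      + assert ((t-b)^2 <= (t-a)^2) by nra. nra.
      + auto. }
  unfold Fb. simpl INR.
  unfold e, Rmin in *. destruct (Rle_dec ((b-a)/2) e0).
  - destruct Rle_dec.
    + assert (D * (b - a) ^ 3 / (12 * (0 + 1) ^ 2) = 2 * D * ((b - a) / 2) ^ 3 / 3) by field.
      lra.
    + assert (D * (b - a) ^ 3 / (12 * (0 + 1) ^ 2) = 2 * D * ((b - a) / 2) ^ 3 / 3) by field.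
      lra.
  - destruct Rle_dec; lra.
Qed.

Lemma core n : forall (S : list R) (f : R -> R) (a b : R), (length S <= n)%nat -> (forall t, continuous f t) -> a <= b ->
  List.Forall (fun s => a <= s <= b) S ->
  (forall t, a <= t <= b -> 0 <= f t) -> hyp f a b S -> Fb (b-a) (length S) <= RInt f a b.
Proof.
  induction n as [|n IH]; intros S f a b Hl Hc Hab HS H0 H.
  - destruct S; [|simpl in Hl; lia]. apply core_base; auto.
  - destruct S as [|s1 rest]. apply core_base; auto.
    inversion HS as [|? ? Hs1 Hrest]; subst.
    set (p := fun s => if Rle_dec s s1 then true else false).
    set (S1 := filter p rest). set (S2 := filter (fun x => negb (p x)) rest).
    assert (Hlen : (length S1 + length S2 = length rest)%nat) by apply filter_length.
    simpl in Hl.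
    assert (IH1 : Fb (s1 - a) (length S1) <= RInt f a s1).
    { apply IH; auto; try lia; try lra.
      - apply List.Forall_forall. intros x Hx. unfold S1 in Hx. apply filter_In in Hx.
        destruct Hx as [Hx Hp]. unfold p in Hp. destruct Rle_dec; [|discriminate].
        rewrite List.Forall_forall in Hrest. specialize (Hrest x Hx). lra.
      - intros t Ht; apply H0; lra.
      - intros t Ht. destruct (H t ltac:(lra)) as [h|[h|[h|[s [hs h]]]]].
        + left; auto.
        + right; left; auto.
        + right; right; left. assert ((t-s1)^2 <= (t-b)^2) by nra. nra.
        + destruct hs as [hs|hs].
          * subst s. right; right; left; auto.
          * destruct (Rle_dec s s1).
            -- right; right; right. exists s. split; auto. unfold S1. apply filter_In.
               split; auto. unfold p. destruct Rle_dec; auto; lra.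
            -- right; right; left. assert ((t-s1)^2 <= (t-s)^2) by nra. nra. }
    assert (IH2 : Fb (b - s1) (length S2) <= RInt f s1 b).
    { apply IH; auto; try lia; try lra.
      - apply List.Forall_forall. intros x Hx. unfold S2 in Hx. apply filter_In in Hx.
        destruct Hx as [Hx Hp]. unfold p in Hp. destruct Rle_dec; [discriminate|].
        rewrite List.Forall_forall in Hrest. specialize (Hrest x Hx). lra.
      - intros t Ht; apply H0; lra.
      - intros t Ht. destruct (H t ltac:(lra)) as [h|[h|[h|[s [hs h]]]]].
        + left; auto.
        + right; left. assert ((t-s1)^2 <= (t-a)^2) by nra. nra.
        + right; right; left; auto.
        + destruct hs as [hs|hs].
          * subst s. right; left; auto.
          * destruct (Rle_dec s s1).
            -- right; left. assert ((t-s1)^2 <= (t-s)^2) by nra. nra.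
            -- right; right; right. exists s. split; auto. unfold S2. apply filter_In.
               split; auto. unfold p. destruct Rle_dec; auto; lra. }
    rewrite (chasles f a s1 b Hc).
    assert (Fb (b - a) (length (s1 :: rest)) <= Fb (s1 - a) (length S1) + Fb (b - s1) (length S2)).
    { unfold Fb. apply min_super.
      - assert (0 < e0^3) by (apply pow_lt; lra). nra.
      - pose proof (pos_INR (length S1)). apply Rmult_le_pos. apply Rmult_le_pos. lra.
        apply pow_le; lra. apply Rlt_le, Rinv_0_lt_compat. nra.
      - pose proof (pos_INR (length S2)). apply Rmult_le_pos. apply Rmult_le_pos. lra.
        apply pow_le; lra. apply Rlt_le, Rinv_0_lt_compat. nra.
      - simpl length. rewrite <- Hlen. rewrite S_INR, plus_INR.
        pose proof (pos_INR (length S1)). pose proof (pos_INR (length S2)).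
        pose proof (cube_super (s1-a) (b-s1) (INR (length S1) + 1) (INR (length S2)+1)
           ltac:(lra) ltac:(lra) ltac:(lra) ltac:(lra)) as K.
        replace (s1 - a + (b - s1)) with (b - a) in K by ring.
        replace (INR (length S1) + INR (length S2) + 1 + 1) with
          (INR (length S1) + 1 + (INR (length S2) + 1)) by ring.
        assert (0 < INR (length S1) + 1) by lra. assert (0 < INR (length S2) + 1) by lra.
        set (N1 := INR (length S1) + 1) in *. set (N2 := INR (length S2) + 1) in *.
        clearbody N1 N2.
        assert (E : forall d N, 0 < N -> D*d^3/(12*N^2) = D/12 * (d^3/N^2)) by (intros; field; lra).
        rewrite !E; try lra. rewrite <- Rmult_plus_distr_l.
        apply Rmult_le_compat_l. lra. exact K. }
    lra.
Qed.
End Core.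
Section Geo.
Variable m : nat.
Hypothesis hm : (3 <= m)%nat.

Definition al := 2 * PI / INR m.

Lemma INRm_pos : 3 <= INR m.
Proof. replace 3 with (INR 3) by (simpl; ring). apply le_INR; auto. Qed.

Lemma al_pos : 0 < al.
Proof. unfold al. pose proof PI_RGT_0. pose proof INRm_pos. apply Rdiv_lt_0_compat; lra. Qed.

Lemma mal : INR m * al = 2 * PI.
Proof. unfold al. pose proof INRm_pos. field. lra. Qed.

Definition vd (p q : nat) := fst (vertex m p) * fst (vertex m q) + snd (vertex m p) * snd (vertex m q).

Lemma vd_cos p q : vd p q = cos ((INR p - INR q) * al).
Proof.
  unfold vd, vertex; simpl. rewrite <- cos_minus. f_equal. unfold al. ring.
Qed.

Lemma cos_le_al d : (1 <= d)%nat -> (d <= m - 1)%nat -> cos (INR d * al) <= cos al.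
Proof.
  intros H1 H2. pose proof al_pos. pose proof PI_RGT_0. pose proof INRm_pos.
  assert (Hal : al * INR m = 2 * PI) by (rewrite Rmult_comm; apply mal).
  assert (Hpi : al <= PI) by nra.
  destruct (le_lt_dec (2*d) m) as [h|h].
  - assert (1 <= INR d) by (replace 1 with (INR 1) by reflexivity; apply le_INR; auto).
    assert (2 * INR d <= INR m) by (replace 2 with (INR 2) by reflexivity; rewrite <- mult_INR; apply le_INR; auto).
    apply cos_decr_1; nra.
  - assert (E : INR d * al = 2 * PI - INR (m - d) * al).
    { rewrite minus_INR by lia. nra. }
    rewrite E. rewrite cos_minus, cos_2PI, sin_2PI.
    replace (1 * cos (INR (m - d) * al) + 0 * sin (INR (m - d) * al)) with (cos (INR (m - d) * al)) by ring.
    assert (1 <= INR (m-d)) by (replace 1 with (INR 1) by reflexivity; apply le_INR; lia).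
    assert (2 * INR (m-d) <= INR m) by (replace 2 with (INR 2) by reflexivity; rewrite <- mult_INR; apply le_INR; lia).
    apply cos_decr_1; nra.
Qed.

Lemma vd_le p q : (p <= m)%nat -> (q <= m)%nat -> p <> q -> ~ (p = 0 /\ q = m)%nat ->
  ~ (p = m /\ q = 0)%nat -> vd p q <= cos al.
Proof.
  intros. rewrite vd_cos. destruct (le_lt_dec p q).
  - replace ((INR p - INR q) * al) with (- (INR (q - p) * al)) by (rewrite minus_INR by lia; ring).
    rewrite cos_neg. apply cos_le_al; lia.
  - replace ((INR p - INR q) * al) with (INR (p - q) * al) by (rewrite minus_INR by lia; ring).
    apply cos_le_al; lia.
Qed.

Lemma vd_le1 p q : vd p q <= 1.
Proof. rewrite vd_cos. apply COS_bound. Qed.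

Lemma vd_same p : vd p p = 1.
Proof. rewrite vd_cos. replace ((INR p - INR p) * al) with 0 by ring. apply cos_0. Qed.

Lemma vd_succ p : vd p (S p) = cos al.
Proof. rewrite vd_cos, S_INR. replace ((INR p - (INR p + 1)) * al) with (- al) by ring. apply cos_neg. Qed.

Lemma vd_succ' p : vd (S p) p = cos al.
Proof. rewrite vd_cos, S_INR. f_equal. ring. Qed.

Lemma vert_mod j : (j < m)%nat -> vertex m (S j mod m) = vertex m (S j).
Proof.
  intros Hj. destruct (Nat.eq_dec (S j) m) as [e|e].
  - rewrite e, Nat.Div0.mod_same. unfold vertex.
    assert (E : 3 * PI / 2 - PI / INR m + INR m * (2 * PI / INR m) =
               (3 * PI / 2 - PI / INR m + INR 0 * (2 * PI / INR m)) + 2 * INR 1 * PI).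
    { fold al. rewrite mal. simpl. ring. }
    rewrite E, cos_period, sin_period. reflexivity.
  - rewrite Nat.mod_small by lia. reflexivity.
Qed.

Definition D := 2 - 2 * cos al.

Lemma D_pos : 0 < D.
Proof.
  unfold D. pose proof al_pos. pose proof PI_RGT_0. pose proof INRm_pos.
  assert (cos al < cos 0).
  { apply cos_decreasing_1; try lra. unfold al. 
    apply Rmult_le_reg_r with (INR m). lra. unfold Rdiv. rewrite Rmult_assoc, Rinv_l by lra. nra. }
  rewrite cos_0 in H2. lra.
Qed.

Lemma sq1 p : fst (vertex m p) ^ 2 + snd (vertex m p) ^ 2 = 1.
Proof. unfold vertex; simpl. pose proof (sin2_cos2 (3 * PI / 2 - PI / INR m + INR p * (2 * PI / INR m))) as H. unfold Rsqr in H. nra. Qed.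


Definition vx j := fst (vertex m (S j)) - fst (vertex m j).
Definition vy j := snd (vertex m (S j)) - snd (vertex m j).

Lemma side_eq j t : (j < m)%nat -> side_pt m j t =
  (fst (vertex m j) + t * vx j, snd (vertex m j) + t * vy j).
Proof. intros. unfold side_pt, vx, vy. rewrite vert_mod; auto. Qed.

Lemma vlen j : vx j ^ 2 + vy j ^ 2 = D.
Proof.
  unfold vx, vy, D. pose proof (sq1 j). pose proof (sq1 (S j)). pose proof (vd_succ j).
  unfold vd in H1. nra.
Qed.

Lemma dist_sides j t s : (j < m)%nat -> dist2 (side_pt m j t) (side_pt m j s) = D * (t - s)^2.
Proof.
  intros. rewrite !side_eq by auto. unfold dist2; cbn [fst snd]. rewrite <- (vlen j). ring.
Qed.

Lemma proj_ineq v1 v2 w1 w2 t N : N = v1^2 + v2^2 -> 0 < N ->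
  N * (t - (w1*v1 + w2*v2)/N)^2 <= (t*v1 - w1)^2 + (t*v2 - w2)^2.
Proof.
  intros HN Hp.
  assert (E : (t*v1 - w1)^2 + (t*v2 - w2)^2 - N * (t - (w1*v1 + w2*v2)/N)^2 = (v1*w2 - v2*w1)^2 / N).
  { subst N. field. lra. }
  assert (0 <= (v1*w2 - v2*w1)^2 / N) by (apply Rmult_le_pos; [apply pow2_ge_0 | apply Rlt_le, Rinv_0_lt_compat; lra]).
  lra.
Qed.

Definition sp j (c : R * R) := ((fst c - fst (vertex m j)) * vx j + (snd c - snd (vertex m j)) * vy j) / D.

Lemma dist_proj j t c : (j < m)%nat -> D * (t - sp j c)^2 <= dist2 (side_pt m j t) c.
Proof.
  intros. rewrite side_eq by auto. unfold dist2, sp; cbn [fst snd].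
  pose proof (proj_ineq (vx j) (vy j) (fst c - fst (vertex m j)) (snd c - snd (vertex m j)) t D
     (eq_sym (vlen j)) D_pos).
  replace ((fst (vertex m j) + t * vx j - fst c) ^ 2 + (snd (vertex m j) + t * vy j - snd c) ^ 2)
    with ((t * vx j - (fst c - fst (vertex m j))) ^ 2 + (t * vy j - (snd c - snd (vertex m j))) ^ 2) by ring.
  exact H0.
Qed.

Definition Mx i := (fst (vertex m i) + fst (vertex m (S i))) / 2.
Definition My i := (snd (vertex m i) + snd (vertex m (S i))) / 2.
Definition dotM (c : R * R) i := fst c * Mx i + snd c * My i.

Lemma dot_side j i t : (j < m)%nat -> dotM (side_pt m j t) i =
  ((1-t) * (vd j i + vd j (S i)) + t * (vd (S j) i + vd (S j) (S i))) / 2.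
Proof. intros. rewrite side_eq by auto. unfold dotM, Mx, My, vd, vx, vy; simpl. field. Qed.

Lemma sep j i t eta : (j < m)%nat -> (i < m)%nat -> i <> j -> 0 <= eta -> eta <= t <= 1 - eta ->
  eta * (1 - cos al) / 2 <= dotM (side_pt m j t) j - dotM (side_pt m j t) i.
Proof.
  intros Hj Hi Hij He Ht. rewrite !dot_side by auto.
  rewrite vd_same, vd_same, vd_succ, vd_succ'.
  pose proof (COS_bound al) as [_ Hc].
  assert (h1 : vd j i <= cos al) by (apply vd_le; lia).
  assert (h2 : vd (S j) (S i) <= cos al) by (apply vd_le; lia).
  pose proof (vd_le1 j (S i)). pose proof (vd_le1 (S j) i).
  destruct (Nat.eq_dec j (S i)) as [e|e].
  - assert (vd (S j) i <= cos al) by (apply vd_le; lia). nra.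
  - destruct (Nat.eq_dec j 0) as [e0|e0].
    + destruct (Nat.eq_dec (S i) m) as [e1|e1].
      * assert (vd (S j) i <= cos al) by (apply vd_le; lia). nra.
      * assert (vd j (S i) <= cos al) by (apply vd_le; lia). nra.
    + assert (vd j (S i) <= cos al) by (apply vd_le; lia). nra.
Qed.

Lemma Mbound i : Mx i ^ 2 <= 1 /\ My i ^ 2 <= 1.
Proof.
  unfold Mx, My, vertex; cbn [fst snd].
  pose proof (COS_bound (3 * PI / 2 - PI / INR m + INR i * (2 * PI / INR m))).
  pose proof (COS_bound (3 * PI / 2 - PI / INR m + (INR i + 1) * (2 * PI / INR m))).
  pose proof (SIN_bound (3 * PI / 2 - PI / INR m + INR i * (2 * PI / INR m))).
  pose proof (SIN_bound (3 * PI / 2 - PI / INR m + (INR i + 1) * (2 * PI / INR m))).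
  rewrite S_INR. split; nra.
Qed.

Lemma far j i t eta c : (j < m)%nat -> (i < m)%nat -> i <> j -> 0 <= eta -> eta <= t <= 1 - eta ->
  dotM c j <= dotM c i ->
  (eta * (1 - cos al) / 2)^2 / 8 <= dist2 (side_pt m j t) c.
Proof.
  intros Hj Hi Hij He Ht Hc.
  pose proof (sep j i t eta Hj Hi Hij He Ht) as Hs.
  set (g := eta * (1 - cos al) / 2) in *.
  assert (Hg : 0 <= g). { unfold g. pose proof (COS_bound al). nra. }
  set (x := side_pt m j t) in *.
  set (w1 := fst c - fst x). set (w2 := snd c - snd x).
  set (v1 := Mx i - Mx j). set (v2 := My i - My j).
  assert (Hwv : g <= w1 * v1 + w2 * v2).
  { unfold w1, w2, v1, v2. unfold dotM in *. clearbody g x. clear w1 w2 v1 v2. nra. }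
  assert (Hv : v1^2 + v2^2 <= 8).
  { unfold v1, v2. destruct (Mbound i), (Mbound j).
    assert ((Mx i - Mx j)^2 <= 2*Mx i^2 + 2*Mx j^2) by (pose proof (pow2_ge_0 (Mx i + Mx j)); nra).
    assert ((My i - My j)^2 <= 2*My i^2 + 2*My j^2) by (pose proof (pow2_ge_0 (My i + My j)); nra).
    lra. }
  assert (CS : (w1*v1 + w2*v2)^2 <= (w1^2 + w2^2) * (v1^2 + v2^2)).
  { assert (0 <= (w1*v2 - w2*v1)^2) by apply pow2_ge_0. nra. }
  assert (E : dist2 x c = w1^2 + w2^2) by (unfold dist2, w1, w2; ring).
  rewrite E.
  assert (g^2 <= (w1*v1 + w2*v2)^2) by nra.
  assert (0 <= w1^2 + w2^2) by nra.
  apply Rmult_le_reg_r with 8. lra.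
  unfold Rdiv. rewrite Rmult_assoc, Rinv_l by lra. nra.
Qed.

End Geo.

Definition sumR {A} (g : A -> R) (l : list A) := fold_right Rplus 0 (map g l).

Lemma sumR_le {A} (g h : A -> R) l : (forall x, In x l -> g x <= h x) -> sumR g l <= sumR h l.
Proof.
  induction l as [|a l IH]; intros H; unfold sumR in *; simpl. lra. pose proof (H a (or_introl eq_refl)).
  assert (fold_right Rplus 0 (map g l) <= fold_right Rplus 0 (map h l)) by (apply IH; intros; apply H; right; auto). lra.
Qed.

Lemma sumR_plus {A} (g h : A -> R) l : sumR (fun x => g x + h x) l = sumR g l + sumR h l.
Proof. induction l; unfold sumR in *; simpl; try rewrite IHl; ring. Qed.

Lemma sumR_scal {A} (g : A -> R) a l : sumR (fun x => a * g x) l = a * sumR g l.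
Proof. induction l; unfold sumR in *; simpl; try rewrite IHl; ring. Qed.

Lemma sumR_const {A} a (l : list A) : sumR (fun _ => a) l = INR (length l) * a.
Proof. induction l; unfold sumR in *; simpl length; try rewrite S_INR; simpl; try rewrite IHl; ring. Qed.

Lemma sumR_nonneg {A} (g : A -> R) l : (forall x, 0 <= g x) -> 0 <= sumR g l.
Proof. intros H. induction l; unfold sumR in *; simpl. lra. pose proof (H a). lra. Qed.

Lemma sumR_min {A} C (X : A -> R) l : 0 <= C -> (forall x, 0 <= X x) ->
  Rmin C (sumR X l) <= sumR (fun x => Rmin C (X x)) l.
Proof.
  intros HC HX. induction l as [|a l IH].
  - unfold sumR; simpl. unfold Rmin; destruct Rle_dec; lra.
  - unfold sumR in *; simpl.
    pose proof (min_super C (X a + fold_right Rplus 0 (map X l)) (X a) (fold_right Rplus 0 (map X l)) HC (HX a)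
      (sumR_nonneg X l HX) (Rle_refl _)).
    lra.
Qed.

Lemma inv_tangent N L : 0 < N -> 0 < L -> 3 / L^2 - 2 * N / L^3 <= 1 / N^2.
Proof.
  intros. assert (E : 1/N^2 - (3/L^2 - 2*N/L^3) = (L - N)^2 * (L + 2*N) / (N^2 * L^3)) by (field; lra).
  assert (0 <= (L - N)^2 * (L + 2*N) / (N^2 * L^3)).
  { apply Rmult_le_pos. apply Rmult_le_pos. apply pow2_ge_0. lra.
    apply Rlt_le, Rinv_0_lt_compat. apply Rmult_lt_0_compat; apply pow_lt; lra. }
  lra.
Qed.

Lemma sum_inv_sq {A} (N : A -> R) l : (forall x, 0 < N x) -> (0 < length l)%nat ->
  INR (length l)^3 / (sumR N l)^2 <= sumR (fun x => 1 / (N x)^2) l.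
Proof.
  intros HN Hl.
  set (L := INR (length l)). set (T := sumR N l).
  assert (HL : 0 < L) by (apply lt_0_INR; auto).
  assert (HT : 0 < T).
  { unfold T. destruct l as [|a l]. simpl in Hl; lia. unfold sumR; simpl.
    pose proof (HN a). pose proof (sumR_nonneg N l (fun x => Rlt_le _ _ (HN x))). unfold sumR in H0. lra. }
  set (lam := T / L).
  assert (Hlam : 0 < lam) by (apply Rdiv_lt_0_compat; auto).
  assert (H1 : sumR (fun x => 3 / lam^2 + (- 2 / lam^3) * N x) l <= sumR (fun x => 1 / (N x)^2) l).
  { apply sumR_le. intros x _. pose proof (inv_tangent (N x) lam (HN x) Hlam).
    replace (3 / lam ^ 2 + -2 / lam ^ 3 * N x) with (3 / lam ^ 2 - 2 * N x / lam ^ 3) by (field; lra). lra. }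
  rewrite sumR_plus, sumR_const, sumR_scal in H1. fold L T in H1.
  replace (L ^ 3 / T ^ 2) with (L * (3 / lam ^ 2) + -2 / lam ^ 3 * T) by (unfold lam; field; lra).
  exact H1.
Qed.

Definition ind (a j : nat) : R := if Nat.eqb a j then 1 else 0.

Lemma ind_sum0 a n : forall s, (a < s)%nat -> sumR (ind a) (seq s n) = 0.
Proof.
  induction n; intros s H; unfold sumR in *; simpl. reflexivity.
  rewrite IHn by lia. unfold ind. destruct (Nat.eqb_spec a s). lia. ring.
Qed.

Lemma ind_sum1 a n : forall s, (s <= a < s + n)%nat -> sumR (ind a) (seq s n) = 1.
Proof.
  induction n; intros s H; unfold sumR in *; simpl. lia.
  unfold ind at 1. destruct (Nat.eqb_spec a s).
  - subst. pose proof (ind_sum0 s n (S s) ltac:(lia)). unfold sumR in H0. rewrite H0. ring.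
  - rewrite IHn by lia. ring.
Qed.

Lemma count_sum (asg : R * R -> nat) m (Cs : list (R * R)) : (forall c, (asg c < m)%nat) ->
  sumR (fun j => INR (length (filter (fun c => Nat.eqb (asg c) j) Cs))) (seq 0 m) = INR (length Cs).
Proof.
  intros Ha. induction Cs as [|c Cs IH].
  - simpl. rewrite sumR_const. simpl. ring.
  - transitivity (sumR (fun j => ind (asg c) j + INR (length (filter (fun c => Nat.eqb (asg c) j) Cs))) (seq 0 m)).
    + unfold sumR. f_equal. apply map_ext. intros j. simpl. unfold ind. destruct (Nat.eqb (asg c) j).
      simpl length. rewrite S_INR. ring. ring.
    + rewrite sumR_plus, IH, ind_sum1 by (pose proof (Ha c); lia). simpl length. rewrite S_INR. ring.
Qed.

Fixpoint best (m : nat) (c : R * R) (k : nat) : nat :=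
  match k with
  | O => O
  | S k' => let b := best m c k' in if Rle_dec (dotM m c k') (dotM m c b) then b else k'
  end.

Lemma best_spec m c k : (best m c (S k) < S k)%nat /\
  forall i, (i <= k)%nat -> dotM m c i <= dotM m c (best m c (S k)).
Proof.
  induction k as [|k [IH1 IH2]].
  - simpl. destruct Rle_dec; split; try lia; intros i Hi; replace i with 0%nat by lia; lra.
  - remember (S k) as k'. simpl. subst k'.
    destruct Rle_dec as [h|h].
    + split. lia. intros i Hi. destruct (Nat.eq_dec i (S k)). subst; auto. apply IH2; lia.
    + split. lia. intros i Hi. destruct (Nat.eq_dec i (S k)). subst; lra.
      pose proof (IH2 i ltac:(lia)). lra.
Qed.

Definition asg m c := best m c m.

Lemma asg_lt m c : (1 <= m)%nat -> (asg m c < m)%nat.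
Proof. intros. unfold asg. destruct m. lia. apply best_spec. Qed.

Lemma asg_max m c i : (i < m)%nat -> dotM m c i <= dotM m c (asg m c).
Proof. intros. unfold asg. destruct m. lia. apply best_spec. lia. Qed.

Lemma md_attained x a0 l : exists a, In a (a0 :: l) /\ min_dist2 x a0 l = dist2 x a.
Proof.
  induction l as [|b l IH]; simpl.
  - exists a0; auto.
  - destruct IH as [a [Ha E]]. unfold Rmin. destruct Rle_dec.
    + exists b. simpl; auto.
    + exists a. split. simpl in Ha |- *. tauto. auto.
Qed.

Lemma md_le x a0 l a : In a (a0 :: l) -> min_dist2 x a0 l <= dist2 x a.
Proof.
  induction l as [|b l IH]; simpl; intros H.
  - destruct H as [H|H]; [subst; lra | contradiction].
  - destruct H as [H|[H|H]].
    + subst. pose proof (IH (or_introl eq_refl)). pose proof (Rmin_r (dist2 x b) (min_dist2 x a l)). lra.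
    + subst. apply Rmin_l.
    + pose proof (IH (or_intror H)). pose proof (Rmin_r (dist2 x b) (min_dist2 x a0 l)). lra.
Qed.

Lemma dist2_nonneg x a : 0 <= dist2 x a.
Proof. unfold dist2. pose proof (pow2_ge_0 (fst x - fst a)). pose proof (pow2_ge_0 (snd x - snd a)). lra. Qed.

Lemma md_nonneg x a0 l : 0 <= min_dist2 x a0 l.
Proof. destruct (md_attained x a0 l) as [a [_ E]]. rewrite E. apply dist2_nonneg. Qed.

Definition clip (eta s : R) := Rmax eta (Rmin (1 - eta) s).

Lemma clip_close eta s t : eta <= t <= 1 - eta -> (t - clip eta s)^2 <= (t - s)^2.
Proof.
  intros H. unfold clip, Rmax, Rmin. repeat destruct Rle_dec; nra.
Qed.

Lemma clip_in eta s : eta <= 1 - eta -> eta <= clip eta s <= 1 - eta.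
Proof. intros. unfold clip, Rmax, Rmin. repeat destruct Rle_dec; lra. Qed.

Definition e0 m eta := eta * (1 - cos (al m)) / 16.

Lemma side_lower m j eta a0 l : (3 <= m)%nat -> (j < m)%nat -> 0 < eta < 1/2 ->
  Fb (D m) (e0 m eta) (1 - 2*eta) (length (filter (fun c => Nat.eqb (asg m c) j) (a0 :: l)))
  <= RInt (fun t => min_dist2 (side_pt m j t) a0 l) 0 1.
Proof.
  intros hm hj he.
  set (f := fun t => min_dist2 (side_pt m j t) a0 l).
  assert (Hc : forall t, continuous f t) by (intros; apply cont_md).
  assert (Hf0 : forall t, 0 <= f t) by (intros; apply md_nonneg).
  rewrite (chasles f 0 eta 1 Hc), (chasles f eta (1 - eta) 1 Hc).
  assert (0 <= RInt f 0 eta) by (apply RInt_ge_0; try apply ex_cont; auto; lra).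
  assert (0 <= RInt f (1 - eta) 1) by (apply RInt_ge_0; try apply ex_cont; auto; lra).
  set (Sj := map (fun c => clip eta (sp m j c)) (filter (fun c => Nat.eqb (asg m c) j) (a0 :: l))).
  assert (He0 : 0 < e0 m eta).
  { pose proof (D_pos m hm) as HD. unfold D in HD. unfold e0.
    apply Rdiv_lt_0_compat; [apply Rmult_lt_0_compat|]; lra. }
  assert (HK := core (D m) (e0 m eta) (D_pos m hm) He0 (length Sj) Sj f eta (1 - eta) (le_n _) Hc ltac:(lra)).
  assert (EL : length Sj = length (filter (fun c => Nat.eqb (asg m c) j) (a0 :: l))) by (unfold Sj; apply length_map).
  rewrite EL in HK.
  replace (1 - eta - eta) with (1 - 2 * eta) in HK by ring.
  cut (Fb (D m) (e0 m eta) (1 - 2 * eta) (length (filter (fun c => Nat.eqb (asg m c) j) (a0 :: l))) <= RInt f eta (1 - eta)).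
  { lra. }
  apply HK.
  - apply List.Forall_forall. intros x Hx. unfold Sj in Hx. apply in_map_iff in Hx.
    destruct Hx as [c [<- _]]. apply clip_in; lra.
  - intros; apply Hf0.
  - intros t Ht. destruct (md_attained (side_pt m j t) a0 l) as [c [Hin E]].
    unfold f; cbv beta; rewrite E.
    destruct (Nat.eq_dec (asg m c) j) as [e|e].
    + right; right; right. exists (clip eta (sp m j c)). split.
      * unfold Sj. apply (in_map (fun c => clip eta (sp m j c))). apply filter_In. split; auto. apply Nat.eqb_eq; auto.
      * pose proof (dist_proj m hm j t c hj). pose proof (clip_close eta (sp m j c) t Ht).
        pose proof (D_pos m hm). nra.
    + left.
      pose proof (far m hm j (asg m c) t eta c hj (asg_lt m c ltac:(lia)) e ltac:(lra) Ht
        (asg_max m c j hj)) as Hfar.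
      pose proof (D_pos m hm) as HD. unfold D in HD.
      pose proof (COS_bound (al m)) as [_ Hc1].
      unfold e0, D.
      assert (0 <= 1 - cos (al m)) by lra. assert (1 - cos (al m) <= 2) by (pose proof (COS_bound (al m)); lra).
      replace (2 - 2 * cos (al m)) with (2 * (1 - cos (al m))) by ring.
      set (K := 1 - cos (al m)) in *. clearbody K.
      eapply Rle_trans; [|exact Hfar].
      replace (2 * K * (eta * K / 16) ^ 2) with (K * (eta^2 * K^2) / 128) by field.
      replace ((eta * K / 2) ^ 2 / 8) with (eta^2 * K^2 / 32) by field.
      assert (0 <= eta^2 * K^2) by nra. nra.
Qed.

Lemma Rmin_mono C a b : a <= b -> Rmin C a <= Rmin C b.
Proof. intros. unfold Rmin. destruct Rle_dec, Rle_dec; lra. Qed.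

Lemma lower m n eta alpha : (3 <= m)%nat -> 0 < eta < 1/2 -> (length alpha <= n - m)%nat ->
  / INR m * Rmin (2 * D m * e0 m eta ^ 3 / 3)
     (D m * (1 - 2*eta)^3 / 12 * (INR m ^ 3 / (INR n + 2 * INR m + 1)^2))
  <= cond_distortion m alpha.
Proof.
  intros hm he hl.
  pose proof (D_pos m hm) as HD.
  assert (Hm : 0 < INR m) by (apply lt_0_INR; lia).
  unfold cond_distortion, P_integral.
  apply Rmult_le_compat_l. left; apply Rinv_0_lt_compat; auto.
  set (Cs := vertex m 0 :: alpha ++ beta m).
  set (k := fun j => length (filter (fun c => Nat.eqb (asg m c) j) Cs)).
  set (C := 2 * D m * e0 m eta ^ 3 / 3).
  set (X := fun j => D m * (1 - 2 * eta) ^ 3 / (12 * (INR (k j) + 1) ^ 2)).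
  assert (HC : 0 <= C).
  { unfold C, e0. pose proof (COS_bound (al m)). assert (0 <= eta * (1 - cos (al m)) / 16) by nra.
    assert (0 <= (eta * (1 - cos (al m)) / 16)^3) by (apply pow_le; auto). nra. }
  assert (HX : forall j, 0 <= X j).
  { intros j. unfold X. pose proof (pos_INR (k j)).
    assert (0 <= (1 - 2*eta)^3) by (apply pow_le; lra).
    apply Rmult_le_pos. nra. apply Rlt_le, Rinv_0_lt_compat. nra. }
  change (fold_right Rplus 0 (map (fun j => RInt (fun t => min_dist2 (side_pt m j t) (vertex m 0) (alpha ++ beta m)) 0 1) (seq 0 m)))
    with (sumR (fun j => RInt (fun t => min_dist2 (side_pt m j t) (vertex m 0) (alpha ++ beta m)) 0 1) (seq 0 m)).
  assert (S1 : sumR (fun j => Rmin C (X j)) (seq 0 m) <=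
     sumR (fun j => RInt (fun t => min_dist2 (side_pt m j t) (vertex m 0) (alpha ++ beta m)) 0 1) (seq 0 m)).
  { apply sumR_le. intros j Hj. apply in_seq in Hj.
    apply (side_lower m j eta (vertex m 0) (alpha ++ beta m) hm ltac:(lia) he). }
  assert (S2 := sumR_min C X (seq 0 m) HC HX).
  assert (S3 : sumR X (seq 0 m) = D m * (1 - 2 * eta) ^ 3 / 12 * sumR (fun j => 1 / (INR (k j) + 1)^2) (seq 0 m)).
  { rewrite <- sumR_scal. unfold sumR. f_equal. apply map_ext. intros j. unfold X.
    pose proof (pos_INR (k j)). field. lra. }
  assert (S4 := sum_inv_sq (fun j => INR (k j) + 1) (seq 0 m)
     (fun j => ltac:(pose proof (pos_INR (k j)); lra)) ltac:(rewrite length_seq; lia)).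
  rewrite length_seq in S4.
  assert (S5 : sumR (fun j => INR (k j) + 1) (seq 0 m) = INR (length Cs) + INR m).
  { rewrite sumR_plus, sumR_const, length_seq. unfold k. rewrite count_sum. ring.
    intros; apply asg_lt; lia. }
  rewrite S5 in S4.
  assert (HCs : INR (length Cs) <= INR n + INR m + 1).
  { unfold Cs. simpl length. rewrite length_app. unfold beta. rewrite length_map, length_seq.
    rewrite S_INR, plus_INR. assert (INR (length alpha) <= INR n).
    { apply le_INR. lia. } lra. }
  assert (S6 : INR m ^ 3 / (INR n + 2 * INR m + 1) ^ 2 <= INR m ^ 3 / (INR (length Cs) + INR m) ^ 2).
  { pose proof (pos_INR (length Cs)). assert (0 < INR (length Cs) + INR m) by lra.
    unfold Rdiv. apply Rmult_le_compat_l. apply pow_le; lra.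
    apply Rinv_le_contravar. apply pow_lt; lra. apply pow_incr. lra. }
  eapply Rle_trans; [|exact S1]. eapply Rle_trans; [|exact S2].
  apply Rmin_mono. rewrite S3. apply Rmult_le_compat_l.
  { assert (0 <= (1 - 2*eta)^3) by (apply pow_le; lra). 
    apply Rmult_le_pos. nra. lra. }
  lra.
Qed.

Definition alpha_up m q := flat_map (fun j => map (fun i => side_pt m j (INR i / INR q)) (seq 1 (q - 1))) (seq 0 m).

Lemma alpha_up_len m q : length (alpha_up m q) = (m * (q - 1))%nat.
Proof.
  unfold alpha_up.
  assert (G : forall (l : list nat) (g : nat -> list (R * R)) K, (forall x, length (g x) = K) ->
     length (flat_map g l) = (length l * K)%nat).
  { induction l; intros g K Hg; simpl. reflexivity. rewrite length_app, IHl with (K := K), Hg; auto. }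
  rewrite G with (K := (q - 1)%nat). rewrite length_seq. reflexivity.
  intros x. rewrite length_map, length_seq. reflexivity.
Qed.

Lemma pieces (f : R -> R) Dd q : (forall t, continuous f t) -> (1 <= q)%nat ->
  (forall i t, (i <= q)%nat -> f t <= Dd * (t - INR i / INR q)^2) ->
  forall k, (k <= q)%nat -> RInt f 0 (INR k / INR q) <= INR k * (Dd * (1 / INR q)^3 / 12).
Proof.
  intros Hc Hq H. assert (Hq' : 0 < INR q) by (apply lt_0_INR; lia).
  induction k; intros Hk.
  - simpl. replace (0 / INR q) with 0 by (field; lra). rewrite RInt_point. unfold zero; simpl. lra.
  - rewrite (chasles f 0 (INR k / INR q) (INR (S k) / INR q) Hc).
    assert (P := piece_upper f Dd (INR k / INR q) (INR (S k) / INR q) Hc).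
    replace (INR (S k) / INR q - INR k / INR q) with (1 / INR q) in P by (rewrite S_INR; field; lra).
    assert (RInt f (INR k / INR q) (INR (S k) / INR q) <= Dd * (1 / INR q) ^ 3 / 12).
    { apply P. rewrite S_INR. unfold Rdiv. apply Rmult_le_compat_r. left; apply Rinv_0_lt_compat; lra. lra.
      intros t _. split; apply H; lia. }
    pose proof (IHk ltac:(lia)). replace (INR (S k) * (Dd * (1 / INR q) ^ 3 / 12)) with (INR k * (Dd * (1 / INR q) ^ 3 / 12) + Dd * (1 / INR q) ^ 3 / 12) by (rewrite S_INR; ring). lra.
Qed.

Lemma in_beta m j : (j < m)%nat -> In (vertex m j) (beta m).
Proof. intros. unfold beta. apply in_map. apply in_seq. lia. Qed.

Lemma side_upper m j q : (3 <= m)%nat -> (j < m)%nat -> (1 <= q)%nat ->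
  RInt (fun t => min_dist2 (side_pt m j t) (vertex m 0) (alpha_up m q ++ beta m)) 0 1
  <= D m / (12 * INR q ^ 2).
Proof.
  intros hm hj hq. assert (Hq' : 0 < INR q) by (apply lt_0_INR; lia).
  set (f := fun t => min_dist2 (side_pt m j t) (vertex m 0) (alpha_up m q ++ beta m)).
  assert (Hc : forall t, continuous f t) by (intros; apply cont_md).
  assert (H : forall i t, (i <= q)%nat -> f t <= D m * (t - INR i / INR q)^2).
  { intros i t Hi. unfold f. rewrite <- (dist_sides m hm j t (INR i / INR q) hj).
    apply md_le. right. apply in_or_app.
    destruct (Nat.eq_dec i 0) as [e|e].
    - subst i. right. replace (side_pt m j (INR 0 / INR q)) with (vertex m j).
      apply in_beta; auto.
      rewrite side_eq by lia. replace (INR 0 / INR q) with 0 by (simpl; field; lra).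
      destruct (vertex m j); simpl; f_equal; ring.
    - destruct (Nat.eq_dec i q) as [e'|e'].
      + subst i. right. replace (side_pt m j (INR q / INR q)) with (vertex m (S j mod m)).
        apply in_beta. apply Nat.mod_upper_bound. lia.
        replace (INR q / INR q) with 1 by (field; lra). unfold side_pt.
        destruct (vertex m (S j mod m)), (vertex m j); simpl; f_equal; ring.
      + left. unfold alpha_up. apply in_flat_map. exists j. split. apply in_seq; lia.
        apply (in_map (fun i => side_pt m j (INR i / INR q))). apply in_seq; lia. }
  pose proof (pieces f (D m) q Hc hq H q (le_n _)) as P.
  replace (INR q / INR q) with 1 in P by (field; lra).
  replace (D m / (12 * INR q ^ 2)) with (INR q * (D m * (1 / INR q) ^ 3 / 12)) by (field; lra).
  exact P.
Qed.

Lemma upper m q : (3 <= m)%nat -> (1 <= q)%nat ->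
  cond_distortion m (alpha_up m q) <= D m / (12 * INR q ^ 2).
Proof.
  intros hm hq.
  assert (Hm : 0 < INR m) by (apply lt_0_INR; lia).
  assert (Hq' : 0 < INR q) by (apply lt_0_INR; lia).
  unfold cond_distortion, P_integral.
  change (fold_right Rplus 0 (map (fun j => RInt (fun t => min_dist2 (side_pt m j t) (vertex m 0) (alpha_up m q ++ beta m)) 0 1) (seq 0 m)))
    with (sumR (fun j => RInt (fun t => min_dist2 (side_pt m j t) (vertex m 0) (alpha_up m q ++ beta m)) 0 1) (seq 0 m)).
  assert (S1 : sumR (fun j => RInt (fun t => min_dist2 (side_pt m j t) (vertex m 0) (alpha_up m q ++ beta m)) 0 1) (seq 0 m)
     <= sumR (fun _ => D m / (12 * INR q ^ 2)) (seq 0 m)).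
  { apply sumR_le. intros j Hj. apply in_seq in Hj. apply side_upper; lia. }
  rewrite sumR_const, length_seq in S1.
  replace (D m / (12 * INR q ^ 2)) with (/ INR m * (INR m * (D m / (12 * INR q ^ 2)))) by (field; lra).
  apply Rmult_le_compat_l. left; apply Rinv_0_lt_compat; auto. exact S1.
Qed.

Lemma V_between m n Lo Up :
  (forall alpha, (length alpha <= n - m)%nat -> Lo <= cond_distortion m alpha) ->
  (exists alpha, (length alpha <= n - m)%nat /\ cond_distortion m alpha <= Up) ->
  Lo <= V m n <= Up.
Proof.
  intros HL [a0 [Ha0 HU]]. unfold V.
  set (E := fun v => exists alpha : list (R * R), (length alpha <= n - m)%nat /\ v = cond_distortion m alpha).
  destruct (Glb_Rbar_correct E) as [Hlb Hg].
  assert (H1 : Rbar_le (Glb_Rbar E) (cond_distortion m a0)) by (apply Hlb; exists a0; auto).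
  assert (H2 : Rbar_le Lo (Glb_Rbar E)).
  { apply Hg. intros x [alpha [Ha ->]]. simpl. apply HL; auto. }
  destruct (Glb_Rbar E) as [g| |]; simpl in *; try contradiction. lra.
Qed.

Lemma lim_ratio a : is_lim_seq (fun n => INR n / (INR n + a)) 1.
Proof.
  assert (Hinv : is_lim_seq (fun n => / INR n) 0).
  { replace (Finite 0) with (Rbar_inv p_infty) by reflexivity.
    apply is_lim_seq_inv. apply is_lim_seq_INR. discriminate. }
  assert (H1 : is_lim_seq (fun n => 1 + a * / INR n) 1).
  { assert (H : is_lim_seq (fun n => 1 + a * / INR n) (1 + a * 0)).
    { apply is_lim_seq_plus'. apply is_lim_seq_const.
      apply is_lim_seq_mult'. apply is_lim_seq_const. exact Hinv. }
    replace (1 + a * 0) with 1 in H by ring. exact H. }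
  assert (H2 : is_lim_seq (fun n => / (1 + a * / INR n)) 1).
  { replace (Finite 1) with (Rbar_inv 1) by (simpl; f_equal; field).
    apply is_lim_seq_inv. exact H1. simpl. intro h. injection h. lra. }
  apply is_lim_seq_ext_loc with (u := fun n => / (1 + a * / INR n)); auto.
  destruct (Rle_dec 0 a) as [ha|ha].
  - exists 1%nat. intros n Hn. assert (0 < INR n) by (apply lt_0_INR; lia). field. split; lra.
  - destruct (nfloor_ex (- a)) as [N [_ HN]]; try lra.
    exists (S N). intros n Hn. assert (INR (S N) <= INR n) by (apply le_INR; auto).
    rewrite S_INR in H. assert (0 < INR n) by (pose proof (pos_INR N); lra). field. split; lra.
Qed.

Lemma lim_ev (u : nat -> R) (l : R) eps : is_lim_seq u l -> 0 < eps ->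
  exists N, forall n, (N <= n)%nat -> l - eps < u n < l + eps.
Proof.
  intros H He. apply is_lim_seq_spec in H. simpl in H. destruct (H (mkposreal eps He)) as [N HN].
  exists N. intros n Hn. specialize (HN n Hn). simpl in HN. apply Rabs_def2 in HN. lra.
Qed.

Lemma Rmin_scal a x y : 0 <= a -> a * Rmin x y = Rmin (a * x) (a * y).
Proof.
  intros. unfold Rmin. destruct (Rle_dec x y), (Rle_dec (a*x) (a*y)); try reflexivity.
  - destruct H. exfalso. apply n. apply Rmult_le_compat_l; lra. subst. ring.
  - destruct H. exfalso. apply n. apply Rmult_le_reg_l with a; lra. subst. ring.
Qed.

Lemma V_bounds m n eta : (3 <= m)%nat -> (2 * m <= n)%nat -> 0 < eta < 1/2 ->
  / INR m * Rmin (2 * D m * e0 m eta ^ 3 / 3)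
     (D m * (1 - 2*eta)^3 / 12 * (INR m ^ 3 / (INR n + 2 * INR m + 1)^2))
  <= V m n <= D m / (12 * INR (n / m) ^ 2).
Proof.
  intros hm hn he. apply V_between.
  - intros alpha Ha. apply lower; auto.
  - exists (alpha_up m (n / m)). split.
    + rewrite alpha_up_len. assert (Hd := Nat.div_mod n m ltac:(lia)).
      assert (m * (n / m) <= n)%nat by (apply Nat.Div0.mul_div_le).
      rewrite Nat.mul_sub_distr_l. rewrite Nat.mul_1_r. lia.
    + apply upper; auto. apply Nat.div_le_lower_bound; lia.
Qed.

Theorem main_thm (m : nat) (hm : (3 <= m)%nat) :
  exists Vinf : R,
    is_lim_seq (fun n => V m n) Vinf /\
    is_lim_seq (fun n => INR n ^ 2 * (V m n - Vinf))
      (1 / 3 * INR m ^ 2 * (sin (PI / INR m)) ^ 2).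
Proof.
  assert (Hm : 3 <= INR m) by (replace 3 with (INR 3) by (simpl; ring); apply le_INR; auto).
  pose proof (D_pos m hm) as HD.
  set (Dm := D m) in *.
  set (c := Dm * INR m ^ 2 / 12).
  assert (Hc : 0 < c) by (unfold c; assert (0 < INR m ^ 2) by (apply pow_lt; lra); assert (0 < Dm * INR m ^ 2) by (apply Rmult_lt_0_compat; lra); lra).
  assert (Ec : 1 / 3 * INR m ^ 2 * (sin (PI / INR m)) ^ 2 = c).
  { unfold c, Dm, D, al. replace (2 * PI / INR m) with (2 * (PI / INR m)) by (field; lra).
    rewrite cos_2a_sin. field. }
  rewrite Ec.
  set (W := fun n => INR n ^ 2 * V m n).
  assert (HW : is_lim_seq W c).
  { apply is_lim_seq_spec. intros eps. destruct eps as [eps Heps]. simpl.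
    assert (LU : is_lim_seq (fun n => c * ((INR n / (INR n + - INR m)) * (INR n / (INR n + - INR m)))) (c * (1 * 1))).
    { apply is_lim_seq_mult'. apply is_lim_seq_const. apply is_lim_seq_mult'; apply lim_ratio. }
    replace (c * (1 * 1)) with c in LU by ring.
    destruct (lim_ev _ _ eps LU Heps) as [N1 HN1].
    set (eta := Rmin (1/4) (eps / (12 * c))).
    assert (Heta : 0 < eta <= 1/4).
    { unfold eta, Rmin. destruct Rle_dec. lra. split; [|lra]. apply Rdiv_lt_0_compat; lra. }
    assert (Heta2 : 6 * eta * c <= eps / 2).
    { assert (eta <= eps / (12 * c)) by apply Rmin_r.
      apply Rmult_le_reg_r with (/ (6 * c)). apply Rinv_0_lt_compat; lra.
      replace (6 * eta * c * / (6 * c)) with eta by (field; lra).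
      replace (eps / 2 * / (6 * c)) with (eps / (12 * c)) by (field; lra). auto. }
    assert (Hcube : c * (1 - 2 * eta)^3 >= c - eps/2).
    { assert ((1 - 2*eta)^3 >= 1 - 6*eta).
      { assert (0 <= eta * eta * (3 - 4 * eta)) by (apply Rmult_le_pos; nra). nra. }
      nra. }
    set (K := c * (1 - 2 * eta)^3) in *.
    assert (LL : is_lim_seq (fun n => K * ((INR n / (INR n + (2 * INR m + 1))) * (INR n / (INR n + (2 * INR m + 1))))) (K * (1 * 1))).
    { apply is_lim_seq_mult'. apply is_lim_seq_const. apply is_lim_seq_mult'; apply lim_ratio. }
    replace (K * (1 * 1)) with K in LL by ring.
    destruct (lim_ev _ _ (eps/2) LL ltac:(lra)) as [N2 HN2].
    set (C := 2 * Dm * e0 m eta ^ 3 / 3).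
    assert (HC : 0 < C).
    { assert (0 < 1 - cos (al m)) by (pose proof HD as HD'; unfold Dm, D in HD'; lra).
      unfold C, e0.
      assert (0 < eta * (1 - cos (al m)) / 16) by (apply Rdiv_lt_0_compat; [apply Rmult_lt_0_compat|]; lra).
      assert (0 < (eta * (1 - cos (al m)) / 16) ^ 3) by (apply pow_lt; auto).
      assert (0 < Dm * (eta * (1 - cos (al m)) / 16) ^ 3) by (apply Rmult_lt_0_compat; auto). lra. }
    pose proof (is_lim_seq_INR) as LI. apply is_lim_seq_spec in LI. simpl in LI.
    destruct (LI (c * INR m / C + 1)) as [N3 HN3].
    exists (N1 + N2 + N3 + 2 * m + 1)%nat. intros n Hn.
    assert (Hn1 : (2 * m <= n)%nat) by lia.
    assert (Hnr : 2 * INR m + 1 <= INR n).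
    { replace (2 * INR m + 1) with (INR (2 * m + 1)) by (rewrite plus_INR, mult_INR; simpl; ring).
      apply le_INR; lia. }
    destruct (V_bounds m n eta hm Hn1 ltac:(lra)) as [Vlo Vup].
    fold Dm in Vlo, Vup. fold C in Vlo.
    apply Rabs_def1.
    +
      specialize (HN1 n ltac:(lia)).
      set (q := (n / m)%nat) in *.
      assert (Hq : INR n < INR m * (INR q + 1)).
      { assert (Hd := Nat.div_mod n m ltac:(lia)). assert (Hr := Nat.mod_upper_bound n m ltac:(lia)).
        fold q in Hd.
        assert (E : INR n = INR m * INR q + INR (n mod m)).
        { rewrite Hd at 1. rewrite plus_INR, mult_INR. reflexivity. }
        assert (INR (n mod m) < INR m) by (apply lt_INR; auto). nra. }
      assert (Hq1 : (INR n - INR m) / INR m < INR q).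
      { apply Rmult_lt_reg_r with (INR m). lra. unfold Rdiv. rewrite Rmult_assoc, Rinv_l by lra. nra. }
      assert (Hq0 : 0 < (INR n - INR m) / INR m) by (apply Rdiv_lt_0_compat; lra).
      assert (Hq2 : ((INR n - INR m) / INR m)^2 <= INR q ^ 2) by (apply pow_incr; lra).
      assert (W n <= c * ((INR n / (INR n + - INR m)) * (INR n / (INR n + - INR m)))).
      { unfold W. eapply Rle_trans.
        apply Rmult_le_compat_l. apply pow_le, pos_INR. exact Vup.
        replace (c * (INR n / (INR n + - INR m) * (INR n / (INR n + - INR m)))) with
          (INR n ^ 2 * (Dm / (12 * ((INR n - INR m) / INR m) ^ 2))) by (unfold c; field; lra).
        apply Rmult_le_compat_l. apply pow_le, pos_INR.
        unfold Rdiv. apply Rmult_le_compat_l. lra.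
        apply Rinv_le_contravar. apply Rmult_lt_0_compat. lra. apply pow_lt. lra. lra. }
      lra.
    +
      specialize (HN2 n ltac:(lia)). specialize (HN3 n ltac:(lia)).
      assert (Hn0 : 1 <= INR n) by lra.
      assert (L1 : c < INR n ^ 2 * / INR m * C).
      { assert (c * INR m / C < INR n) by lra.
        assert (c * INR m < INR n * C).
        { apply Rmult_lt_reg_r with (/ C). apply Rinv_0_lt_compat; lra.
          replace (INR n * C * / C) with (INR n) by (field; lra). exact H. }
        assert (INR n * C <= INR n ^ 2 * C) by (apply Rmult_le_compat_r; nra).
        apply Rmult_lt_reg_r with (INR m). lra.
        replace (INR n ^ 2 * / INR m * C * INR m) with (INR n ^ 2 * C) by (field; lra). lra. }
      assert (L2 : INR n ^ 2 * / INR m * (Dm * (1 - 2 * eta) ^ 3 / 12 * (INR m ^ 3 / (INR n + 2 * INR m + 1) ^ 2))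
                   = K * (INR n / (INR n + (2 * INR m + 1)) * (INR n / (INR n + (2 * INR m + 1))))).
      { unfold K, c. field. lra. }
      assert (c - eps < W n).
      { unfold W. eapply Rlt_le_trans; [|apply Rmult_le_compat_l; [apply pow_le, pos_INR | exact Vlo]].
        rewrite <- Rmult_assoc. rewrite Rmin_scal.
        2: { apply Rmult_le_pos. apply pow_le, pos_INR. left; apply Rinv_0_lt_compat; lra. }
        rewrite L2. unfold Rmin. destruct Rle_dec; lra. }
      lra. }
  exists 0. split.
  - apply is_lim_seq_ext_loc with (u := fun n => W n * (/ INR n * / INR n)).
    + exists 1%nat. intros n Hn. unfold W. assert (0 < INR n) by (apply lt_0_INR; lia). field. lra.
    + replace (Finite 0) with (Finite (c * (0 * 0))) by (f_equal; ring).
      apply is_lim_seq_mult'. exact HW.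
      assert (Hinv : is_lim_seq (fun n => / INR n) 0).
      { replace (Finite 0) with (Rbar_inv p_infty) by reflexivity.
        apply is_lim_seq_inv. apply is_lim_seq_INR. discriminate. }
      apply is_lim_seq_mult'; exact Hinv.
  - apply is_lim_seq_ext with (u := W). intros n. unfold W. f_equal. ring. exact HW.
Qed.

Theorem theorem5p6 (m : nat) (hm : (3 <= m)%nat) :
  exists Vinf : R,
    is_lim_seq (fun n => V m n) Vinf /\
    is_lim_seq (fun n => INR n ^ 2 * (V m n - Vinf))
      (1 / 3 * INR m ^ 2 * (sin (PI / INR m)) ^ 2).
Proof. exact (main_thm m hm). Qed.
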